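(* Let $L\in(0,\infty]$ and let $\gamma\in C^\infty([0,L),\mathbb{R}^2)$ be an arclength-parameterized plane curve with $\gamma(s)\neq0$ for all $s\in(0,L)$, with unit tangent $T=\gamma_s$, unit normal $N=R_{\pi/2}T$, signed curvature $\kappa$ ($\gamma_{ss}=\kappa N$) and polar tangential angle function $\omega:(0,L)\to\mathbb{R}$. Let $s\in(0,L)$ with $\kappa(s)\neq0$, and let $e(s):=\gamma(s)+\kappa(s)^{-1}N(s)$ (the center of the osculating circle). Then: (i) $\kappa(s)\omega_s(s)$ and $\gamma(s)\cdot e(s)$ have the same sign; (ii) equivalently, letting $\hat c(s)$ be the circle having the segment from $\gamma(s)$ to $e(s)$ as a diameter, $\kappa(s)\omega_s(s)>0$ iff the origin lies outside $\hat c(s)$, $\kappa(s)\omega_s(s)<0$ iff the origin lies inside $\hat c(s)$, and $\kappa(s)\omega_s(s)=0$ iff the origin lies on $\hat c(s)$; (iii) in particular, if the origin does not belong to the open disk $D(s)$ of radius $1/|\kappa(s)|$ centered at $e(s)$ (the disk enclosed by the osculating circle), then $\kappa(s)\omega_s(s)>0$.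
   Context: $R_\theta$ denotes counterclockwise rotation by angle $\theta$. With $X:=\gamma/|\gamma|$ on $(0,L)$, a polar tangential angle function is a smooth $\omega:(0,L)\to\mathbb{R}$ with $R_{\omega(s)}X(s)=T(s)$ for all $s\in(0,L)$. *)

(* Defs.v *)
From Stdlib Require Import Reals.
From Coquelicot Require Import Coquelicot.
Open Scope R_scope.

Definition dot (u v : R * R) : R := fst u * fst v + snd u * snd v.
Definition vnorm (u : R * R) : R := sqrt (dot u u).
Definition vadd (u v : R * R) : R * R := (fst u + fst v, snd u + snd v).
Definition vscale (a : R) (u : R * R) : R * R := (a * fst u, a * snd u).

Definition rot (th : R) (u : R * R) : R * R :=
  (cos th * fst u - sin th * snd u, sin th * fst u + cos th * snd u).

Definition cx (g : R -> R * R) : R -> R := fun t => fst (g t).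
Definition cy (g : R -> R * R) : R -> R := fun t => snd (g t).

Definition in0L (L : Rbar) (t : R) : Prop := 0 < t /\ Rbar_lt t L.

(* f is C^oo on [0, L): all derivatives exist on (0, L), f is right-continuous
   at 0, and every derivative extends continuously to 0 from the right. *)
Definition smooth_0L (L : Rbar) (f : R -> R) : Prop :=
  (forall n t, in0L L t -> ex_derive_n f n t) /\
  filterlim f (at_right 0) (locally (f 0)) /\
  (forall n, exists l : R, filterlim (Derive_n f n) (at_right 0) (locally l)).

Definition smooth_curve_0L (L : Rbar) (g : R -> R * R) : Prop :=
  smooth_0L L (cx g) /\ smooth_0L L (cy g).

Definition smooth_open_0L (L : Rbar) (f : R -> R) : Prop :=
  forall n t, in0L L t -> ex_derive_n f n t.

Definition tangent (g : R -> R * R) (t : R) : R * R :=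
  (Derive (cx g) t, Derive (cy g) t).

(* arclength parameterization on [0, L) (|gamma_s| = 1; at 0 this follows by
   continuity of the extended derivative) *)
Definition arclength (L : Rbar) (g : R -> R * R) : Prop :=
  forall t, in0L L t -> vnorm (tangent g t) = 1.

Definition normal (g : R -> R * R) (t : R) : R * R := rot (PI / 2) (tangent g t).

Definition accel (g : R -> R * R) (t : R) : R * R :=
  (Derive_n (cx g) 2 t, Derive_n (cy g) 2 t).

Definition is_signed_curvature (L : Rbar) (g : R -> R * R) (kappa : R -> R) : Prop :=
  forall t, in0L L t -> accel g t = vscale (kappa t) (normal g t).

Definition radial_dir (g : R -> R * R) (t : R) : R * R :=
  vscale (/ vnorm (g t)) (g t).

Definition polar_tangential_angle (L : Rbar) (g : R -> R * R) (omega : R -> R) : Prop :=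
  smooth_open_0L L omega /\
  forall t, in0L L t -> rot (omega t) (radial_dir g t) = tangent g t.

Definition osc_center (g : R -> R * R) (kappa : R -> R) (t : R) : R * R :=
  vadd (g t) (vscale (/ kappa t) (normal g t)).

(* Main.v *)
Require Import Defs.
From Stdlib Require Import Reals Lra Psatz.
From Coquelicot Require Import Coquelicot.
Open Scope R_scope.

Lemma in0L_loc (L : Rbar) (s : R) : in0L L s -> locally s (in0L L).
Proof.
  intros [H1 H2]. destruct L as [l| |]; simpl in H2.
  - assert (Hp : 0 < Rmin s (l - s)) by (apply Rmin_pos; lra).
    exists (mkposreal _ Hp). intros t Ht. unfold ball in Ht; simpl in Ht.
    unfold AbsRing_ball, abs, minus, plus, opp in Ht; simpl in Ht.
    pose proof (Rmin_l s (l - s)). pose proof (Rmin_r s (l - s)).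
    apply Rabs_def2 in Ht. split; simpl; lra.
  - exists (mkposreal _ H1). intros t Ht. unfold ball in Ht; simpl in Ht.
    unfold AbsRing_ball, abs, minus, plus, opp in Ht; simpl in Ht.
    apply Rabs_def2 in Ht. split; simpl; [lra|exact I].
  - contradiction.
Qed.

Lemma sqrt_cmp (a b : R) : 0 <= a -> 0 <= b ->
  ((sqrt a / 2 < sqrt b <-> a / 4 < b) /\ (sqrt b < sqrt a / 2 <-> b < a / 4)
   /\ (sqrt b = sqrt a / 2 <-> b = a / 4)).
Proof.
  intros Ha Hb. pose proof (sqrt_sqrt a Ha). pose proof (sqrt_sqrt b Hb).
  pose proof (sqrt_pos a). pose proof (sqrt_pos b).
  repeat split; intros; nra.
Qed.

Theorem corollary2p5
  (L : Rbar) (gamma : R -> R * R) (kappa omega : R -> R) (s : R) :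
  Rbar_lt 0 L ->
  smooth_curve_0L L gamma ->
  arclength L gamma ->
  (forall t, in0L L t -> gamma t <> (0, 0)) ->
  is_signed_curvature L gamma kappa ->
  polar_tangential_angle L gamma omega ->
  in0L L s ->
  kappa s <> 0 ->
  let e := osc_center gamma kappa s in
  let k_ws := kappa s * Derive omega s in
  (* center and radius of the circle c^(s) with diameter [gamma(s), e(s)] *)
  let m := vscale (/ 2) (vadd (gamma s) e) in
  let r := vnorm (vadd e (vscale (-1) (gamma s))) / 2 in
  (* (i) same sign *)
  ((0 < k_ws <-> 0 < dot (gamma s) e) /\
   (k_ws < 0 <-> dot (gamma s) e < 0) /\
   (k_ws = 0 <-> dot (gamma s) e = 0)) /\
  (* (ii) position of the origin relative to c^(s) *)
  ((0 < k_ws <-> r < vnorm m) /\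
   (k_ws < 0 <-> vnorm m < r) /\
   (k_ws = 0 <-> vnorm m = r)) /\
  (* (iii) origin outside the open osculating disk D(s) *)
  (~ (vnorm e < / Rabs (kappa s)) -> 0 < k_ws).
Proof.
  intros HL [[Hs1 _] [Hs2 _]] Harc Hnz Hcurv [Homs Hpol] Hs Hk e k_ws m r.
  set (g1 := cx gamma). set (g2 := cy gamma).
  set (h := fun t => (g1 t * Derive g2 t - g2 t * Derive g1 t) * cos (omega t)
                   - (g1 t * Derive g1 t + g2 t * Derive g2 t) * sin (omega t)).
  assert (Hloc : locally s (fun t => 0 = h t)).
  { apply (filter_imp (in0L L)); [|apply in0L_loc; exact Hs].
    intros t Ht. pose proof (Hpol t Ht) as Hp. unfold rot, radial_dir, vscale, tangent in Hp.
    simpl in Hp. injection Hp as Hp1 Hp2. unfold h.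
    change (cx gamma) with g1 in Hp1. change (cy gamma) with g2 in Hp2.
    rewrite <- Hp1, <- Hp2. unfold g1, g2, cx, cy. ring. }
  assert (H0 : is_derive h s 0).
  { eapply is_derive_ext_loc; [exact Hloc|]. auto_derive; [exact I| ring]. }
  set (A1 := Derive_n g1 2 s). set (A2 := Derive_n g2 2 s).
  set (w := omega s). set (w' := Derive omega s).
  set (D1 := Derive g1 s). set (D2 := Derive g2 s).
  set (G1 := g1 s). set (G2 := g2 s).
  assert (HE : is_derive h s
     ((D1*D2 + G1*A2 - D2*D1 - G2*A1)*cos w - (G1*D2 - G2*D1)*sin w * w'
      - (D1*D1 + G1*A1 + D2*D2 + G2*A2)*sin w - (G1*D1 + G2*D2) * cos w * w')).
  { unfold h. auto_derive; [repeat split|];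
      try (first [exact (Hs1 1%nat s Hs) | exact (Hs1 2%nat s Hs) | exact (Hs2 1%nat s Hs)
                 | exact (Hs2 2%nat s Hs) | exact (Homs 1%nat s Hs)]).
    unfold A1, A2, w, w', D1, D2, G1, G2.
    change (Derive_n g2 2 s) with (Derive (fun x => Derive g2 x) s).
    change (Derive_n g1 2 s) with (Derive (fun x => Derive g1 x) s).
    change (fun x : R => g1 x) with g1. change (fun x : R => g2 x) with g2.
    change (fun x : R => omega x) with omega.
    ring. }
  assert (HE0 := is_derive_unique _ _ _ HE).
  rewrite (is_derive_unique _ _ _ H0) in HE0. clear HE H0 Hloc.
  pose proof (Hcurv s Hs) as Hc. unfold accel, vscale, normal, rot, tangent in Hc.
  simpl in Hc. rewrite cos_PI2, sin_PI2 in Hc. injection Hc as HA1 HA2.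
  change (Derive (cx gamma) s) with D1 in HA1, HA2.
  change (Derive (cy gamma) s) with D2 in HA1, HA2.
  assert (HA1' : A1 = kappa s * (0 * D1 - 1 * D2)) by exact HA1.
  assert (HA2' : A2 = kappa s * (1 * D1 + 0 * D2)) by exact HA2.
  clear HA1 HA2. rename HA1' into HA1. rename HA2' into HA2.
  assert (Hunit : D1 * D1 + D2 * D2 = 1).
  { pose proof (Harc s Hs) as Ha. unfold vnorm, dot, tangent in Ha. simpl in Ha.
    change (sqrt (D1*D1 + D2*D2) = 1) in Ha.
    assert (0 <= D1*D1 + D2*D2) by nra.
    rewrite <- (sqrt_sqrt _ H), Ha. ring. }
  assert (Hgs : gamma s = (G1, G2)) by (unfold G1, G2, g1, g2, cx, cy; destruct (gamma s); reflexivity).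
  set (P := G1 * G1 + G2 * G2).
  assert (HP : 0 < P).
  { pose proof (Hnz s Hs) as Hn. rewrite Hgs in Hn.
    destruct (Req_dec G1 0) as [E1|E1]; [destruct (Req_dec G2 0) as [E2|E2]|].
    - exfalso. apply Hn. rewrite E1, E2. reflexivity.
    - unfold P. nra.
    - unfold P. nra. }
  set (rho := sqrt P).
  assert (Hrho : rho * rho = P) by (apply sqrt_sqrt; lra).
  assert (Hrho0 : 0 < rho) by (apply sqrt_lt_R0; lra).
  set (i := / rho).
  assert (Hi : i * rho = 1) by (unfold i; field; lra).
  assert (HiP : i * P = rho) by (rewrite <- Hrho; unfold i; field; lra).
  pose proof (Hpol s Hs) as Hp. unfold rot, radial_dir, vscale, tangent, vnorm, dot in Hp.
  rewrite Hgs in Hp. simpl in Hp. injection Hp as HD1 HD2.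
  change (Derive (cx gamma) s) with D1 in HD1.
  change (Derive (cy gamma) s) with D2 in HD2.
  change (sqrt (G1 * G1 + G2 * G2)) with rho in HD1, HD2. fold i in HD1, HD2.
  change (omega s) with w in HD1, HD2.
  set (c := cos w) in *. set (sn := sin w) in *.
  assert (Hcs : c * c + sn * sn = 1).
  { unfold c, sn. pose proof (sin2_cos2 w). unfold Rsqr in H. lra. }
  assert (Hu : G1 * D1 + G2 * D2 = i * c * P) by (rewrite <- HD1, <- HD2; unfold P; ring).
  assert (Hv : G1 * D2 - G2 * D1 = i * sn * P) by (rewrite <- HD1, <- HD2; unfold P; ring).
  assert (Hkey : (kappa s - w') * P = sn * rho).
  { assert (HE1 : 0 = kappa s * (G1 * D1 + G2 * D2) * c - (G1 * D2 - G2 * D1) * sn * w'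
        - (D1 * D1 + D2 * D2 - kappa s * (G1 * D2 - G2 * D1)) * sn - (G1 * D1 + G2 * D2) * c * w').
    { rewrite HA1, HA2 in HE0. etransitivity; [exact HE0|]. ring. }
    rewrite Hu, Hv, Hunit in HE1.
    assert (HE2 : 0 = (i * P) * (kappa s - w') * (c * c + sn * sn) - sn) by (rewrite HE1; ring).
    rewrite Hcs, HiP in HE2.
    assert (HE3 : 0 = ((kappa s - w') * P - sn * rho) * i) by (rewrite HE2; rewrite <- HiP; ring_simplify; rewrite <- Hrho; unfold i; field; lra).
    assert (i <> 0) by (unfold i; apply Rinv_neq_0_compat; lra).
    symmetry in HE3; apply Rmult_integral in HE3 as [HE3|HE3]; [lra|contradiction]. }
  set (d := dot (gamma s) e).
  assert (Hdv : d = P - / kappa s * (G1 * D2 - G2 * D1)).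
  { unfold d, e, osc_center, dot, vadd, vscale, normal, rot, tangent. rewrite Hgs. simpl.
    rewrite cos_PI2, sin_PI2. fold D1 D2. change (Derive (cx gamma) s) with D1. change (Derive (cy gamma) s) with D2. unfold P. field. exact Hk. }
  assert (Hd : k_ws * P = (kappa s * kappa s) * d).
  { unfold k_ws. fold w'. rewrite Hdv, Hv. 
    replace (i * sn * P) with (sn * rho) by (rewrite <- HiP; ring).
    rewrite <- Hkey. field. exact Hk. }
  assert (Hee : dot e e = 2 * d - P + / (kappa s * kappa s)).
  { rewrite Hdv. unfold e, osc_center, dot, vadd, vscale, normal, rot, tangent. rewrite Hgs. simpl.
    rewrite cos_PI2, sin_PI2. change (Derive (cx gamma) s) with D1. change (Derive (cy gamma) s) with D2.
    replace (/ (kappa s * kappa s)) with (/ (kappa s * kappa s) * (D1 * D1 + D2 * D2)) by (rewrite Hunit; ring).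
    unfold P. field. exact Hk. }
  assert (HK : 0 < kappa s * kappa s) by (apply Rsqr_pos_lt; exact Hk).
  assert (Hi1 : (0 < k_ws <-> 0 < d) /\ (k_ws < 0 <-> d < 0) /\ (k_ws = 0 <-> d = 0)).
  { repeat split; intros; nra. }
  split; [exact Hi1|]. split.
  - unfold m, r, vnorm. fold d in Hi1.
    assert (Hm : dot (vscale (/ 2) (vadd (gamma s) e)) (vscale (/ 2) (vadd (gamma s) e))
       = dot (vadd e (vscale (-1) (gamma s))) (vadd e (vscale (-1) (gamma s))) / 4 + d).
    { unfold d. destruct e as [e1 e2]. rewrite Hgs. unfold dot, vadd, vscale; simpl. field. }
    assert (Ha : 0 <= dot (vadd e (vscale (-1) (gamma s))) (vadd e (vscale (-1) (gamma s)))).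
    { unfold dot. nra. }
    assert (Hb : 0 <= dot (vscale (/ 2) (vadd (gamma s) e)) (vscale (/ 2) (vadd (gamma s) e))).
    { unfold dot. nra. }
    destruct (sqrt_cmp _ _ Ha Hb) as [S1 [S2 S3]]. rewrite S1, S2, S3, Hm. destruct Hi1 as [I1 [I2 I3]].
    repeat split; intros; lra.
  - intros Hn. apply Rnot_lt_le in Hn. apply Hi1.
    assert (Hx : / (kappa s * kappa s) <= dot e e).
    { assert (0 <= / Rabs (kappa s)) by (apply Rlt_le, Rinv_0_lt_compat, Rabs_pos_lt, Hk).
      unfold vnorm in Hn. 
      assert (Hee0 : 0 <= dot e e) by (unfold dot; nra).
      rewrite <- (sqrt_sqrt (dot e e)) by exact Hee0.
      replace (/ (kappa s * kappa s)) with (/ Rabs (kappa s) * / Rabs (kappa s)).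
      + nra.
      + rewrite <- Rinv_mult, <- Rabs_mult, Rabs_right by lra. reflexivity. }
    lra.
Qed.
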